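(* Let $M_K$ be an Oeljeklaus–Toma manifold as described in the context. For any point $x\in M_K$, the leaf $\mathcal L_x$ of the foliation $\mathcal F$ through $x$ is dense in the fiber $p^{-1}(p(x))$ (a real torus of dimension $m+1$). Equivalently, for any $t=(t_1,\dots,t_m)\in\mathbb{H}^{m-1}\times\mathbb{C}$, the set $\pi(\{(t_1,\dots,t_{m-1})\}\times\mathbb{C})$ is dense in the fiber of $p$ over $p(\pi(t))\in\mathbb{T}^{m-1}$.
   Context: Let $K$ be a number field of degree $n=s+2$ over $\mathbb{Q}$ with $s\ge 1$, having exactly $s$ real embeddings $\sigma_1,\dots,\sigma_s$ and exactly one pair of complex conjugate embeddings $\sigma_{s+1},\sigma_{s+2}=\overline{\sigma_{s+1}}$; put $m=s+1$. Let $O_K$ be its ring of integers and $O_K^{*,+}$ the group of units $a$ with $\sigma_i(a)>0$ for $1\le i\le s$. Let $G\subset O_K^{*,+}$ be an admissible subgroup, i.e. a subgroup of rank $s$ such that $\Lambda=\{(\log\sigma_1(a),\dots,\log\sigma_s(a)):a\in G\}$ is a full lattice in $\mathbb{R}^{m-1}$. With $\mathbb{H}$ the upper half plane, $b\in O_K$ acts on $\mathbb{H}^{m-1}\times\mathbb{C}$ by $z\mapsto z+(\sigma_1(b),\dots,\sigma_m(b))$ and $a\in G$ by $z\mapsto(\sigma_1(a)z_1,\dots,\sigma_m(a)z_m)$; the generated group $\Gamma=G\ltimes O_K$ acts freely and properly discontinuously and $M_K=(\mathbb{H}^{m-1}\times\mathbb{C})/\Gamma$ with covering map $\pi$. Write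 $z_j=x_j+\sqrt{-1}y_j$. The map $z\mapsto(\log y_1,\dots,\log y_{m-1})$ induces a fiber bundle projection $p:M_K\to\mathbb{T}^{m-1}=\mathbb{R}^{m-1}/\Lambda$ with fibers real tori $\mathbb{T}^{m+1}$. The foliation of $\mathbb{H}^{m-1}\times\mathbb{C}$ with leaves $\{z'\}\times\mathbb{C}$ is $\Gamma$-invariant and induces a nonsingular holomorphic foliation $\mathcal F$ on $M_K$ whose leaves are the images under $\pi$ of these leaves. *)

(* Defs.v *)
From HB Require Import structures.
From mathcomp Require Import all_boot all_order all_algebra all_field.
From mathcomp Require Import complex.
From mathcomp Require Import all_classical all_reals all_analysis.

Set Implicit Arguments.
Unset Strict Implicit.
Unset Printing Implicit Defensive.

Import Order.TTheory GRing.Theory Num.Theory.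
Local Open Scope ring_scope.
Local Open Scope classical_set_scope.

Definition ring_of_integers (K : fieldType) : set K :=
  (fun a : K => exists p : {poly int}, p \is monic /\ root (map_poly (intr : int -> K) p) a).

Definition totally_positive_units (R : realType) (s : nat) (K : fieldType)
  (sigmaR : 'I_s -> {rmorphism K -> R}) : set K :=
  fun a : K => [/\ a != 0, @ring_of_integers K a, @ring_of_integers K a^-1
             & forall j, 0 < sigmaR j a].

Definition log_lattice (R : realType) (s : nat) (K : fieldType)
  (sigmaR : 'I_s -> {rmorphism K -> R}) (G : set K) : set 'rV[R]_s :=
  fun v : 'rV[R]_s => exists2 a, G a & v = \row_j ln (sigmaR j a).

Definition full_lattice (R : realType) (s : nat) (L : set 'rV[R]_s) : Prop :=
  exists B : 'M[R]_s, B \in unitmx /\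
    L = (fun v : 'rV[R]_s => exists k : 'rV[int]_s, v = map_mx (intr : int -> R) k *m B).

(* admissible subgroup G of O_K^{*,+} (its rank is then automatically s,
   since a -> Lambda is injective) *)
Definition admissible (R : realType) (s : nat) (K : fieldType)
  (sigmaR : 'I_s -> {rmorphism K -> R}) (G : set K) : Prop :=
  [/\ G 1, (forall a b, G a -> G b -> G (a * b)),
      (forall a, G a -> G a^-1),
      G `<=` totally_positive_units sigmaR
    & full_lattice (log_lattice sigmaR G)].

(* Points of H^{m-1} x C with m = s+1 : (z_1..z_s, z_m) *)
Definition pt (R : realType) (s : nat) : Type := ('I_s -> R[i]) * R[i].

Definition in_HC (R : realType) (s : nat) (z : pt R s) : Prop :=
  forall j, 0 < complex.Im (z.1 j).

(* The action of the element of Gamma = G |x O_K given by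
   z |-> sigma(a) z + sigma(b); every element of Gamma has this form. *)
Definition gact (R : realType) (s : nat) (K : fieldType)
  (sigmaR : 'I_s -> {rmorphism K -> R}) (sigmaC : {rmorphism K -> R[i]})
  (a b : K) (z : pt R s) : pt R s :=
  (fun j => ((sigmaR j a)%:C * z.1 j + (sigmaR j b)%:C)%C,
   sigmaC a * z.2 + sigmaC b).

(* pi^{-1}( pi( {t'} x C ) ) : Gamma-saturation of the leaf through t *)
Definition saturated_leaf (R : realType) (s : nat) (K : fieldType)
  (sigmaR : 'I_s -> {rmorphism K -> R}) (sigmaC : {rmorphism K -> R[i]})
  (G : set K) (t : pt R s) : set (pt R s) :=
  fun w : pt R s => exists a b z, [/\ G a, @ring_of_integers K b
                           & w = gact sigmaR sigmaC a b (t.1, z)].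

(* the lift to H^{m-1} x C of p : z |-> (log y_1, ..., log y_{m-1}) *)
Definition logy (R : realType) (s : nat) (z : pt R s) : 'rV[R]_s :=
  \row_j ln (complex.Im (z.1 j)).

(* pi^{-1}( p^{-1}( p(pi t) ) ) : points whose image in T^{m-1} = R^{m-1}/Lambda
   is the same as that of t *)
Definition fiber_preimage (R : realType) (s : nat) (K : fieldType)
  (sigmaR : 'I_s -> {rmorphism K -> R}) (G : set K) (t : pt R s) : set (pt R s) :=
  fun w : pt R s => in_HC w /\ log_lattice sigmaR G (logy w - logy t).

Definition cabs (R : realType) (z : R[i]) : R :=
  Num.sqrt (complex.Re z ^+ 2 + complex.Im z ^+ 2).

Definition dense_in (R : realType) (s : nat) (A B : set (pt R s)) : Prop :=
  forall w, B w -> forall e : R, 0 < e ->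
    exists2 v, A v & (forall j, cabs (v.1 j - w.1 j) < e) /\ cabs (v.2 - w.2) < e.

(* Main.v *)
Require Import Defs.
From HB Require Import structures.
From mathcomp Require Import all_boot all_order all_algebra all_field.
From mathcomp Require Import complex.
From mathcomp Require Import all_classical all_reals all_analysis.
From mathcomp Require Import lra.
Import Order.TTheory GRing.Theory Num.Theory.
Local Open Scope ring_scope.
Local Open Scope classical_set_scope.
Lemma bernoulli_ge (R : realFieldType) (h : R) (n : nat) : 0 <= h ->
  1 + n%:R * h <= (1 + h) ^+ n.
Proof.
move=> h0; elim: n => [|n IH]; first by rewrite expr0 mul0r addr0.
rewrite exprS -natr1.
set X := (1 + h) ^+ n in IH *.
have hn : 0 <= n%:R :> R by rewrite ler0n.
have h1 : 0 <= n%:R * (h * h) by rewrite mulr_ge0 // mulr_ge0.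
have h2 : 0 <= (X - (1 + n%:R * h)) * (1 + h) by rewrite mulr_ge0 //; lra.
lra.
Qed.

Lemma pow_small (R : realType) (q eps : R) : 0 < q < 1 -> 0 < eps ->
  exists k : nat, forall k', (k <= k')%N -> q ^+ k' < eps.
Proof.
move=> /andP[q0 q1] e0.
set h := q^-1 - 1.
have hq : q^-1 = 1 + h by rewrite /h; lra.
have h0 : 0 < h.
  rewrite /h subr_gt0 invf_gt1 //.
have he : 0 < eps * h by apply: mulr_gt0.
exists (Num.bound ((eps * h)^-1)) => k' hk.
have hb : (eps * h)^-1 < (Num.bound ((eps * h)^-1))%:R.
  by apply: archi_boundP; rewrite ltW // invr_gt0.
have hk' : ((eps * h)^-1) < k'%:R.
  apply: (lt_le_trans hb); by rewrite ler_nat.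
have hB := @bernoulli_ge R h k' (ltW h0).
have hpos : 0 < q ^+ k' by apply: exprn_gt0.
have : (q ^+ k')^-1 = (1 + h) ^+ k' by rewrite -exprVn hq.
move=> hinv.
have : eps^-1 < (q ^+ k')^-1.
  rewrite hinv; apply: (lt_le_trans _ hB).
  have : eps^-1 = (eps * h)^-1 * h by rewrite invfM mulfVK // gt_eqF.
  move=> ->. have: (eps * h)^-1 * h < k'%:R * h by rewrite ltr_pM2r.
  lra.
by rewrite ltf_pV2 ?posrE.
Qed.

Lemma lattice_neg (R : realType) (s : nat) (B : 'M[R]_s) : B \in unitmx ->
  exists k : 'rV[int]_s,
   (forall j, (map_mx intr k *m B) 0 j < 0) /\
   (forall i j, (map_mx intr k *m B) 0 i = (map_mx intr k *m B) 0 j -> i = j).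
Proof.
move=> hB.
set C : R := 1 + \sum_i \sum_j `|B i j|.
have hS : 0 <= \sum_i \sum_j `|B i j| by apply: sumr_ge0 => i _; apply: sumr_ge0.
have C0 : 0 < C by rewrite /C; lra.
set y : 'rV[R]_s := \row_j (- (3 * C * (j.+1)%:R)).
set x := y *m invmx B.
have hxB : x *m B = y by rewrite /x mulmxKV.
clearbody x.
set k : 'rV[int]_s := \row_i Num.floor (x 0 i).
exists k.
set err := map_mx intr k - x.
have hv : map_mx intr k *m B = err *m B + y by rewrite /err mulmxDl mulNmx hxB addrNK.
have herr : forall i, `|err 0 i| <= 1.
  move=> i; rewrite /err !mxE.
  have := Num.Theory.floor_le (x 0 i); have := Num.Theory.floorD1_gt (x 0 i).
  rewrite intrD rmorph1 => h1 h2.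
  rewrite ler_norml; apply/andP; split; lra.
have hE : forall j, `|(err *m B) 0 j| < C.
  move=> j; rewrite mxE.
  apply: (le_lt_trans (ler_norm_sum _ _ _)).
  apply: (@le_lt_trans _ _ (\sum_i \sum_j `|B i j|)); last by rewrite /C; lra.
  apply: ler_sum => i _.
  rewrite normrM.
  apply: (@le_trans _ _ `|B i j|).
    by rewrite -[X in _ <= X]mul1r ler_wpM2r.
  by rewrite (bigD1 j) //= lerDl sumr_ge0.
have hvj : forall j, (map_mx intr k *m B) 0 j = (err *m B) 0 j - 3 * C * (j.+1)%:R.
  by move=> j; rewrite hv [(_ + y) 0 j]mxE [y 0 j]mxE.
split.
  move=> j; rewrite hvj.
  have := hE j; rewrite ltr_norml => /andP[h1 h2].
  have hn : 0 <= (j.+1)%:R - 1 :> R by rewrite subr_ge0 ler1n.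
  have := mulr_ge0 (ltW C0) hn. lra.
move=> i j; rewrite !hvj.
have := hE j; rewrite ltr_norml => /andP[h1 h2].
have := hE i; rewrite ltr_norml => /andP[h3 h4].
case: (ltngtP i j) => [hij|hij|hij]; last by move=> _; apply: val_inj.
- have : (i.+2)%:R <= (j.+1)%:R :> R by rewrite ler_nat.
  rewrite -[(i.+2)%:R]natr1 => hh.
  move=> heq; exfalso.
  have hn : 0 <= (j.+1)%:R - ((i.+1)%:R + 1) :> R by rewrite subr_ge0.
  have := mulr_ge0 (ltW C0) hn. lra.
- have : (j.+2)%:R <= (i.+1)%:R :> R by rewrite ler_nat.
  rewrite -[(j.+2)%:R]natr1 => hh.
  move=> heq; exfalso.
  have hn : 0 <= (i.+1)%:R - ((j.+1)%:R + 1) :> R by rewrite subr_ge0.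
  have := mulr_ge0 (ltW C0) hn. lra.
Qed.

Lemma approx (R : realType) (s : nat) (u : 'I_s -> R) :
  (forall j, 0 < u j < 1) -> injective u ->
  forall (r : 'I_s -> R) (e : R), 0 < e ->
  exists (n : 'I_s -> int) (k : nat), forall j,
    `|\sum_i (n i)%:~R * u j ^+ (i + k) - r j| < e.
Proof.
move=> hu uinj r e e0.
set eps := e / (s%:R + 1).
have eps0 : 0 < eps by rewrite divr_gt0 // ltr_wpDl.
have : forall j, exists kj : nat, forall k', (kj <= k')%N -> u j ^+ k' < eps.
  by move=> j; apply: pow_small.
case/fin_all_exists => f hf.
set k := \max_j f j.
have hk : forall j, u j ^+ k < eps by move=> j; apply: hf; apply: leq_bigmax.
set W : 'M[R]_s := Vandermonde s (\row_j u j) *m diag_mx (\row_j u j ^+ k).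
have hW : forall i j, W i j = u j ^+ (i + k).
  by move=> i j; rewrite /W mul_mx_diag !mxE exprD.
have Wu : W \in unitmx.
  rewrite unitmxE unitfE det_mulmx det_diag det_Vandermonde mulf_neq0 //.
    apply/prodf_neq0 => i _; apply/prodf_neq0 => j hij; rewrite !mxE subr_eq0.
    apply/eqP => /uinj hji; move: hij; by rewrite hji ltnn.
  apply/prodf_neq0 => i _; rewrite mxE expf_neq0 //.
  by have := hu i => /andP[h _]; rewrite gt_eqF.
clearbody W.
set mu := (\row_j r j) *m invmx W.
have hmu : mu *m W = \row_j r j by rewrite /mu mulmxKV.
clearbody mu.
exists (fun i => Num.floor (mu 0 i)), k => j.
have hrj : r j = \sum_i mu 0 i * W i j.
  by have := congr1 (fun M : 'rV_s => M 0 j) hmu; rewrite /= !mxE => <-.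
rewrite hrj -sumrB.
apply: (@le_lt_trans _ _ (\sum_(i < s) u j ^+ k)).
  apply: (le_trans (ler_norm_sum _ _ _)); apply: ler_sum => i _.
  rewrite -hW -mulrBl normrM.
  have hW0 : 0 <= W i j by rewrite hW exprn_ge0 //; have := hu j; case/andP => h _; exact: ltW.
  have hWk : W i j <= u j ^+ k.
    have := hu j; case/andP => h1 h2.
    rewrite hW exprD; apply: (@le_trans _ _ (1 * u j ^+ k)); last by rewrite mul1r.
    apply: ler_wpM2r; [exact: exprn_ge0 (ltW h1) | exact: exprn_ile1 (ltW h1) (ltW h2)].
  have hf1 : `|(Num.floor (mu 0 i))%:~R - mu 0 i| <= 1.
    have := Num.Theory.floor_le (mu 0 i); have := Num.Theory.floorD1_gt (mu 0 i).
    rewrite intrD rmorph1 => h1 h2.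
    rewrite ler_norml; apply/andP; split; lra.
  rewrite (ger0_norm hW0).
  apply: (le_trans _ hWk).
  by rewrite -[X in _ <= X]mul1r ler_wpM2r.
rewrite sumr_const card_ord.
have := hk j.
have hs : 0 <= s%:R :> R by rewrite ler0n.
rewrite -mulr_natr.
move=> h.
have : u j ^+ k * s%:R <= eps * s%:R by rewrite ler_wpM2r // ltW.
have : eps * s%:R < e.
  rewrite /eps mulrAC ltr_pdivrMr ?ltr_wpDl //.
  rewrite ltr_pM2l //; lra.
lra.
Qed.

Theorem lemma2p1 (R : realType) (s : nat) (K : fieldExtType rat)
  (sigmaR : 'I_s -> {rmorphism K -> R}) (sigmaC : {rmorphism K -> R[i]})
  (G : set K)
  (hs : (0 < s)%N)
  (hdim : \dim {: K} = s.+2)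
  (hR_inj : forall i j, (forall a, sigmaR i a = sigmaR j a) -> i = j)
  (hR_all : forall f : {rmorphism K -> R}, exists j, forall a, f a = sigmaR j a)
  (hC_nonreal : exists a, complex.Im (sigmaC a) != 0)
  (hC_all : forall f : {rmorphism K -> R[i]},
      [\/ exists j, forall a, f a = ((sigmaR j a)%:C)%C,
          forall a, f a = sigmaC a
        | forall a, f a = ((sigmaC a)^*)%C])
  (hG : admissible sigmaR G)
  (t : pt R s) (ht : in_HC t) :
  dense_in (saturated_leaf sigmaR sigmaC G t) (fiber_preimage sigmaR G t).
Proof.
move=> w [hw [a0 Ga0 hlog]] e e0.
case: hG => G1 GM GV Gpos [B [Bu hL]].
have [a0n0 _ _ a0pos] := Gpos a0 Ga0.
have [kk [hneg hinj]] := @lattice_neg R s B Bu.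
have : log_lattice sigmaR G (map_mx intr kk *m B) by rewrite hL; exists kk.
case=> a Ga hka.
have [an0 aint _ apos] := Gpos a Ga.
have hlna : forall j, ln (sigmaR j a) = (map_mx intr kk *m B) 0 j.
  by move=> j; rewrite hka mxE.
have hu : forall j, 0 < sigmaR j a < 1.
  move=> j; rewrite apos /= ltNge; apply/negP => h1.
  have := ln_ge0 h1; rewrite hlna; have := hneg j; lra.
have uinj : injective (fun j => sigmaR j a).
  by move=> i j /= hij; apply: hinj; rewrite -!hlna hij.
have [n [k hnk]] := @approx R s _ hu uinj
   (fun j => complex.Re (w.1 j) - sigmaR j a0 * complex.Re (t.1 j)) e e0.
set b := \sum_i (n i)%:~R * a ^+ (i + k).
have hb : ring_of_integers b.
  have : integralOver (intr : int -> K) b.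
    rewrite /b; elim/big_ind: _ => //.
    - exact: (@mxpoly.integral0 _ K intr).
    - by move=> x y; apply: (@mxpoly.integral_add _ K intr).
    move=> i _; apply: (@mxpoly.integral_mul _ K intr); first exact: (@mxpoly.integral_id _ K intr).
    elim: (i + k)%N => [|m IH]; first by rewrite expr0; exact: (@mxpoly.integral1 _ K intr).
    rewrite exprS; apply: (@mxpoly.integral_mul _ K intr) ; last exact: IH.
    by case: aint => p [hp hr]; exists p.
  by case=> p hp hr; exists p; split.
have sigb : forall j, sigmaR j b = \sum_i (n i)%:~R * sigmaR j a ^+ (i + k).
  by move=> j; rewrite rmorph_sum; apply: eq_bigr => i _; rewrite rmorphM rmorph_int rmorphXn.
have sC0 : sigmaC a0 != 0 by rewrite fmorph_eq0.
set z := (w.2 - sigmaC b) / sigmaC a0.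
exists (gact sigmaR sigmaC a0 b (t.1, z)); first by exists a0, b, z.
split; last first.
  rewrite /gact /= /z mulrC divfK // subrK subrr /cabs /=.
  by rewrite expr0n /= addr0 sqrtr0.
move=> j.
have key : complex.Im (w.1 j) = sigmaR j a0 * complex.Im (t.1 j).
  have := congr1 (fun M : 'rV_s => M 0 j) hlog; rewrite /= /logy !mxE => hl.
  have wp := hw j; have tp := ht j.
  apply: ln_inj; rewrite ?posrE ?mulr_gt0 //.
  by rewrite lnM ?posrE // -hl; lra.
move: key (hnk j); rewrite -sigb /gact /cabs /=.
case: (w.1 j) => wr wi; case: (t.1 j) => tr ti /= -> hn.
rewrite !mul0r subr0 !addr0 subrr expr0n /= addr0 sqrtr_sqr.
move: hn; have -> : sigmaR j b - (wr - sigmaR j a0 * tr) = sigmaR j a0 * tr + sigmaR j b - wr.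
  by rewrite opprB addrCA addrA.
done.
Qed.
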